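(* Let $f=f(x_1,\ldots,x_n)$ be a positive non-canalyzing Boolean function with $k$ relevant variables such that for some $i\in[n]$ at least one of the restrictions $f_{|x_i=0}$, $f_{|x_i=1}$ is non-canalyzing. Then $f$ has at least $k+2$ extremal points.
   Context: $B=\{0,1\}$, $\preceq$ coordinatewise order. $f$ is positive if $f(\mathbf{x})=1$ and $\mathbf{x}\preceq\mathbf{y}$ imply $f(\mathbf{y})=1$. Extremal points are the $\preceq$-maximal false points and $\preceq$-minimal true points. $f_{|x_i=\alpha}$ is obtained by fixing $x_i=\alpha$; $x_i$ is relevant if $f_{|x_i=0}\not\equiv f_{|x_i=1}$. $f$ is canalyzing if for some $i$, $f_{|x_i=0}$ or $f_{|x_i=1}$ is constant. *)

(* Defs.v *)
From mathcomp Require Import all_boot.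
Set Implicit Arguments. Unset Strict Implicit. Unset Printing Implicit Defensive.

Definition point (n : nat) := {ffun 'I_n -> bool}.

Definition boolfun (n : nat) := point n -> bool.

Definition ple n (x y : point n) : bool := [forall i, x i ==> y i].

Definition positive n (f : boolfun n) : Prop :=
  forall x y : point n, f x = true -> ple x y -> f y = true.

Definition max_false n (f : boolfun n) (x : point n) : bool :=
  ~~ f x && [forall y : point n, (~~ f y && ple x y) ==> (y == x)].
Definition min_true n (f : boolfun n) (x : point n) : bool :=
  f x && [forall y : point n, (f y && ple y x) ==> (y == x)].
Definition extremal n (f : boolfun n) (x : point n) : bool :=
  max_false f x || min_true f x.

(* f_{|x_i = a}, viewed as a function of the same n variables (x_i becomes fictitious) *)
Definition restr n (f : boolfun n) (i : 'I_n) (a : bool) : boolfun n :=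
  fun x => f [ffun j => if j == i then a else x j].

Definition constant_fun n (g : boolfun n) : Prop :=
  exists c : bool, forall x, g x = c.

Definition relevant n (f : boolfun n) (i : 'I_n) : bool :=
  [exists x : point n, restr f i false x != restr f i true x].

Definition canalyzing n (f : boolfun n) : Prop :=
  exists i : 'I_n, constant_fun (restr f i false) \/ constant_fun (restr f i true).

(* Main.v *)
Require Import Defs.
From mathcomp Require Import all_boot.
From Stdlib Require Import FunctionalExtensionality Classical.
Set Implicit Arguments. Unset Strict Implicit. Unset Printing Implicit Defensive.

Definition upd n (x : point n) (i : 'I_n) (b : bool) : point n :=
  [ffun j => if j == i then b else x j].

Lemma restrE n (f : boolfun n) i a x : restr f i a x = f (upd x i a).
Proof. by []. Qed.

Lemma updE n (x : point n) i b k : upd x i b k = if k == i then b else x k.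
Proof. by rewrite ffunE. Qed.

Lemma pleP n (x y : point n) : reflect (forall k, x k -> y k) (ple x y).
Proof.
apply: (iffP forallP) => H k; first by move=> xk; have := H k; rewrite xk.
by apply/implyP; apply: H.
Qed.

Lemma ple_refl n (x : point n) : ple x x.
Proof. by apply/pleP. Qed.

Lemma ple_trans n (x y z : point n) : ple x y -> ple y z -> ple x z.
Proof. move=> /pleP h1 /pleP h2; apply/pleP => k /h1 /h2 //. Qed.

Lemma ple_anti n (x y : point n) : ple x y -> ple y x -> x = y.
Proof.
move=> /pleP h1 /pleP h2; apply/ffunP => k.
by case E: (x k); case F: (y k) => //; [move: (h1 k); rewrite E F => /(_ isT) | move: (h2 k); rewrite E F => /(_ isT)].
Qed.

Lemma upd_id n (x : point n) i b : x i = b -> upd x i b = x.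
Proof. move=> h; apply/ffunP => k; rewrite updE; case: eqP => // ->; by rewrite h. Qed.

Lemma upd_upd n (x : point n) i b c : upd (upd x i b) i c = upd x i c.
Proof. apply/ffunP => k; rewrite !updE; by case: eqP. Qed.

Lemma upd_comm n (x : point n) i j b c : i != j ->
  upd (upd x i b) j c = upd (upd x j c) i b.
Proof.
move=> ij; apply/ffunP => k; rewrite !updE.
case: (eqVneq k i) => [->|ki]; first by rewrite (negbTE ij).
by case: (eqVneq k j).
Qed.

Lemma upd_i n (x : point n) i b : upd x i b i = b.
Proof. by rewrite updE eqxx. Qed.

Lemma upd_ne n (x : point n) i b k : k != i -> upd x i b k = x k.
Proof. by rewrite updE => /negbTE ->. Qed.

Lemma ple_upd_false n (x : point n) i : ple (upd x i false) x.
Proof. apply/pleP => k; rewrite updE; by case: eqP. Qed.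

Lemma ple_upd_true n (x : point n) i : ple x (upd x i true).
Proof. apply/pleP => k; rewrite updE; by case: eqP. Qed.

Lemma ple_upd_mono n (x y : point n) i b : ple x y -> ple (upd x i b) (upd y i b).
Proof. move=> /pleP h; apply/pleP => k; rewrite !updE; case: eqP => // _; exact: h. Qed.

Lemma mtP n (f : boolfun n) x :
  reflect (f x /\ forall y, f y -> ple y x -> y = x) (min_true f x).
Proof.
apply: (iffP andP) => [[fx /forallP h]|[fx h]]; split => //.
  by move=> y fy yx; have := h y; rewrite fy yx => /eqP.
by apply/forallP => y; apply/implyP => /andP [fy yx]; apply/eqP; apply: h.
Qed.

Lemma mfP n (f : boolfun n) x :
  reflect (f x = false /\ forall y, f y = false -> ple x y -> y = x) (max_false f x).
Proof.
apply: (iffP andP) => [[/negbTE fx /forallP h]|[fx h]]; split => //.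
  by move=> y fy yx; have := h y; rewrite fy yx => /eqP.
  by rewrite fx.
by apply/forallP => y; apply/implyP => /andP [/negbTE fy yx]; apply/eqP; apply: h.
Qed.

Definition ones n (x : point n) := #|[set k | x k]|.

Lemma ones_lt n (x y : point n) : ple x y -> x != y -> ones x < ones y.
Proof.
move=> /pleP h ne; apply: proper_card; apply/properP; split.
  by apply/subsetP => k; rewrite !inE; apply: h.
case/boolP: [exists k, y k && ~~ x k] => [/existsP [k /andP [yk xk]]|/existsPn H].
  by exists k; rewrite inE //; rewrite inE (negbTE xk).
case/eqP: ne; apply: ple_anti; apply/pleP => // k yk.
by have := H k; rewrite yk /=; case: (x k).
Qed.

Lemma exists_mt n (f : boolfun n) y : f y -> exists x, min_true f x /\ ple x y.
Proof.
move=> fy.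
have P0 : (fun x : point n => f x && ple x y) y by rewrite /= fy ple_refl.
case: (@arg_minnP _ y (fun x : point n => f x && ple x y) (@ones n) P0) => x /andP [fx xy] H.
exists x; split => //; apply/mtP; split => // z fz zx.
apply/eqP; apply: contraT => ne.
have := H z; rewrite fz (ple_trans zx xy) => /(_ isT).
by rewrite leqNgt (ones_lt zx ne).
Qed.

Lemma mt_lt n (f : boolfun n) x y : min_true f x -> ple y x -> y != x -> f y = false.
Proof.
move=> /mtP [_ h] yx ne; apply/negbTE/negP => fy.
by move: ne; rewrite (h _ fy yx) eqxx.
Qed.

Lemma ple_ft n (x : point n) j : ple (upd x j false) (upd x j true).
Proof. apply/pleP => k; rewrite !updE; by case: eqP. Qed.

Lemma upd_false_neq n (x : point n) j : x j -> upd x j false != x.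
Proof. by move=> xj; apply/eqP => /(congr1 (fun z : point n => z j)); rewrite upd_i xj. Qed.

Lemma rel_mt n (f : boolfun n) j : positive f ->
  relevant f j <-> exists x, min_true f x /\ x j.
Proof.
move=> pf; split.
  case/existsP => x; rewrite !restrE => ne.
  have ff : f (upd x j false) = false.
    apply/negbTE/negP => h; move: ne; by rewrite h (pf _ _ h (ple_ft x j)).
  have ft : f (upd x j true) by move: ne; rewrite ff; case: (f _).
  have [m [mt mle]] := exists_mt ft.
  exists m; split => //; apply/negP => /negP mj.
  have : ple m (upd x j false).
    move/pleP: mle => h; apply/pleP => k mk; rewrite updE; case: eqP => [e|/eqP kj].
      by move: mj; rewrite -e mk.
    by move: (h k mk); rewrite upd_ne.
  move=> mle'; move/mtP: mt => [fm _].
  by move: ff; rewrite (pf _ _ fm mle').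
case=> x [mt xj]; apply/existsP; exists x; rewrite !restrE (upd_id xj).
move/mtP: (mt) => [fx _]; rewrite fx.
by rewrite (mt_lt mt (ple_upd_false x j) (upd_false_neq xj)).
Qed.

Lemma positive_restr n (f : boolfun n) i a : positive f -> positive (restr f i a).
Proof. move=> pf x y; rewrite !restrE => fx xy; apply: pf fx _; exact: ple_upd_mono. Qed.

Lemma rel_restr_sub n (f : boolfun n) i s j :
  relevant (restr f i s) j -> (j != i) && relevant f j.
Proof.
case/existsP => x; rewrite !restrE.
case: (eqVneq j i) => [->|ji]; first by rewrite !upd_upd eqxx.
rewrite !(upd_comm _ _ _ ji) => ne /=.
by apply/existsP; exists (upd x i s); rewrite !restrE.
Qed.

Definition relset n (f : boolfun n) := [set i : 'I_n | relevant f i].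

Lemma card_rel_restr n (f : boolfun n) i s :
  relevant f i -> (forall j, relevant f j -> j != i -> relevant (restr f i s) j) ->
  #|relset (restr f i s)| + 1 = #|relset f|.
Proof.
move=> ri H.
have -> : relset (restr f i s) = relset f :\ i.
  apply/setP => j; rewrite !inE.
  apply/idP/idP => [/rel_restr_sub //|/andP [ji rj]]; exact: H.
by rewrite [in RHS](cardsD1 i) inE ri addnC.
Qed.

Lemma notrel n (f : boolfun n) j : ~~ relevant f j -> forall x, f (upd x j false) = f (upd x j true).
Proof. move/existsPn => H x; move: (H x); rewrite !restrE; by case: (f _); case: (f _). Qed.

Lemma C2 n (f : boolfun n) (i0 : 'I_n) : positive f -> relevant f i0 ->
  exists i, relevant f i /\
   ((forall j, relevant f j -> j != i -> relevant (restr f i false) j) \/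
    (forall j, relevant f j -> j != i -> relevant (restr f i true) j)).
Proof.
move=> pf ri0.
pose N0 (i : 'I_n) := #|[set x | min_true f x && x i]|.
case: (@arg_minnP _ i0 (fun i => relevant f i) N0 ri0) => i ri Hmin.
exists i; split => //.
case: (boolP [forall j, relevant f j ==> (j != i) ==> relevant (restr f i false) j]) => [/forallP H|].
  by left => j rj ji; move: (H j); rewrite rj ji.
case/forallPn => j; rewrite negb_imply => /andP [rj]; rewrite negb_imply => /andP [ji nrj].
right => k rk ki; case/boolP: (relevant (restr f i true) k) => // nrk.
have Hj := notrel nrj; have Hk := notrel nrk.
have Tji : forall x, min_true f x -> x j -> x i.
  move=> x mt xj; case xi: (x i) => //.
  have h1 : f (upd x j false) = false by apply: mt_lt mt (ple_upd_false _ _) (upd_false_neq xj).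
  have e1 : upd x j false = upd (upd x j false) i false.
    by rewrite [RHS]upd_id // upd_ne // eq_sym.
  have h := Hj x; rewrite !restrE -e1 (upd_id xj) (upd_id xi) h1 in h.
  by move/mtP: mt => [fx _]; rewrite -h in fx.
have Tij : forall x, min_true f x -> x i -> x j.
  have sub : [set x | min_true f x && x j] \subset [set x | min_true f x && x i].
    apply/subsetP => x; rewrite !inE => /andP [mt xj]; by rewrite mt (Tji x mt xj).
  have := Hmin j rj; rewrite /N0 => le.
  have /eqP E : [set x | min_true f x && x j] == [set x | min_true f x && x i].
    by rewrite eqEcard sub le.
  move=> x mt xi; have : x \in [set x | min_true f x && x i] by rewrite inE mt xi.
  by rewrite -E inE => /andP [].
have [A [mtA Ak]] := (rel_mt k pf).1 rk.
have Ai : A i = false.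
  apply/negbTE/negP => Ai.
  have : f (upd A k false) = false by apply: mt_lt mtA (ple_upd_false _ _) (upd_false_neq Ak).
  have e1 : upd A k false = upd (upd A k false) i true by rewrite [RHS]upd_id // upd_ne // eq_sym.
  move: (Hk A); rewrite !restrE -e1 (upd_id Ak) (upd_id Ai) => ->.
  by move/mtP: mtA => [-> _].
have Aj : A j = false by apply/negbTE/negP => /(Tji A mtA); rewrite Ai.
have jk : j != k by apply/eqP => e; move: Aj; rewrite e Ak.
set z0 := upd (upd A k false) i true.
have fz0 : f z0.
  move: (Hk A); rewrite !restrE => ->; rewrite (upd_id Ak).
  move/mtP: mtA => [fA _]; apply: pf fA _; exact: ple_upd_true.
have [B [mtB Bz]] := exists_mt fz0.
case Bi: (B i).
  have := Tij B mtB Bi; move/pleP: Bz => h /h.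
  by rewrite /z0 upd_ne // upd_ne // Aj.
have : f (upd A k false) = false by apply: mt_lt mtA (ple_upd_false _ _) (upd_false_neq Ak).
have : ple B (upd A k false).
  apply/pleP => l Bl; move/pleP: Bz => h; have := h l Bl.
  rewrite /z0 updE; case: eqP => [e|//]; by move: Bl; rewrite e Bi.
move=> le; move/mtP: mtB => [fB _]; by rewrite (pf _ _ fB le).
Qed.

Lemma pos_false n (f : boolfun n) x y : positive f -> ple x y -> f y = false -> f x = false.
Proof. move=> pf xy fy; apply/negbTE/negP => fx; by rewrite (pf _ _ fx xy) in fy. Qed.

Lemma upd_true_neq n (x : point n) j : x j = false -> upd x j true != x.
Proof. by move=> xj; apply/eqP => /(congr1 (fun z : point n => z j)); rewrite upd_i xj. Qed.

Lemma G1 n (f : boolfun n) i x : min_true (restr f i false) x -> x i = false /\ min_true f x.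
Proof.
move=> mt; move/mtP: (mt) => [gx H].
have xi : x i = false.
  case xi: (x i) => //.
  have := mt_lt mt (ple_upd_false x i) (upd_false_neq xi).
  by rewrite restrE upd_upd -restrE gx.
split => //; apply/mtP; split; first by move: gx; rewrite restrE upd_id.
move=> y fy yx; have yi : y i = false by move/pleP: yx => h; case yi: (y i) => //; rewrite -xi (h _ yi).
by apply: H yx; rewrite restrE upd_id.
Qed.

Lemma G2 n (f : boolfun n) i x : max_false (restr f i false) x -> x i = true.
Proof.
move/mfP => [gx H]; case xi: (x i) => //.
have := H (upd x i true); rewrite restrE upd_upd -restrE gx => /(_ erefl (ple_upd_true _ _)).
by move/eqP; rewrite (negbTE (upd_true_neq xi)).
Qed.

Lemma G3 n (f : boolfun n) i x : positive f -> max_false (restr f i false) x -> f x = false ->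
  max_false f x.
Proof.
move=> pf /mfP [gx H] fx; apply/mfP; split => // y fy xy.
apply: H xy; rewrite restrE; exact: pos_false pf (ple_upd_false _ _) fy.
Qed.

Lemma G4 n (f : boolfun n) i x : positive f -> max_false (restr f i false) x -> f x ->
  max_false f (upd x i false).
Proof.
move=> pf mf fx; have xi := G2 mf; move/mfP: mf => [gx H].
apply/mfP; split => // y fy /pleP xy.
have yi : y i = false.
  case yi: (y i) => //.
  have : ple x y.
    apply/pleP => l xl; case: (eqVneq l i) => [->//|li]; apply: xy; by rewrite upd_ne.
  by move=> le; rewrite (pf _ _ fx le) in fy.
have le : ple x (upd y i true).
  apply/pleP => l xl; rewrite updE; case: eqP => // /eqP li; apply: xy; by rewrite upd_ne.
have := H _ _ le; rewrite restrE upd_upd (upd_id yi) => /(_ fy) <-.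
by rewrite upd_upd upd_id.
Qed.

Definition extset n (f : boolfun n) := [set x | extremal f x].
Definition phi n (f : boolfun n) i (x : point n) := if x i && f x then upd x i false else x.

Lemma G5 n (f : boolfun n) i x : positive f -> x \in extset (restr f i false) ->
  phi f i x \in extset f.
Proof.
move=> pf; rewrite !inE /extremal /phi => /orP [mf|mt].
  rewrite (G2 mf) /=; case fx: (f x); first by rewrite (G4 pf mf fx).
  by rewrite (G3 pf mf fx).
have [xi mt'] := G1 mt; by rewrite xi /= mt' orbT.
Qed.

Lemma G6 n (f : boolfun n) i : {in extset (restr f i false) &, injective (phi f i)}.
Proof.
have key : forall x y, x \in extset (restr f i false) -> y \in extset (restr f i false) ->
    x i && f x -> ~~ (y i && f y) -> phi f i x = phi f i y -> False.
  move=> x y; rewrite !inE /extremal /phi => ex ey fl nfl; rewrite fl (negbTE nfl) => e.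
  have yi : y i = false by rewrite -e upd_i.
  case/orP: ey => [/G2|/mtP [gy _]]; first by rewrite yi.
  move: ex => /orP [/mfP [gx _]|/G1 [xi _]]; last by move: fl; rewrite xi.
  by move: gx gy; rewrite !restrE -e upd_upd => ->.
move=> x y ex ey e.
case fx: (x i && f x); case fy: (y i && f y).
- move: e; rewrite /phi fx fy => e.
  move: fx fy => /andP [xi _] /andP [yi _].
  by rewrite -(upd_id xi) -(upd_id yi) -(upd_upd x i false) -(upd_upd y i false) e.
- by case: (key x y ex ey); rewrite ?fx ?fy.
- by case: (key y x ey ex); rewrite ?fx ?fy.
- by move: e; rewrite /phi fx fy.
Qed.

Lemma G7 n (f : boolfun n) i y : f y -> y i ->
  y \notin [set phi f i x | x in extset (restr f i false)].
Proof.
move=> fy yi; apply/imsetP => [[x ex e]].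
move: ex e; rewrite inE /extremal /phi; case fl: (x i && f x).
  move=> /orP [/mfP [gx _]|/G1 [xi _]]; last by move: fl; rewrite xi.
  by move=> e; move: gx; rewrite restrE -e fy.
by move=> _ e; move: fl; rewrite -e yi fy.
Qed.

Lemma G8 n (f : boolfun n) i (z : point n) : z i -> ~~ max_false (restr f i false) z ->
  z \notin [set phi f i x | x in extset (restr f i false)].
Proof.
move=> zi nmf; apply/imsetP => [[x ex e]].
move: ex e; rewrite inE /extremal /phi; case fl: (x i && f x).
  by move=> _ e; move: zi; rewrite e upd_i.
move=> /orP [mf e|/G1 [xi _] e]; first by move: nmf; rewrite e mf.
by move: zi; rewrite e xi.
Qed.

Lemma count_lemma (T : finType) (D E X : {set T}) (g : T -> T) :
  {in D &, injective g} -> (forall x, x \in D -> g x \in E) -> X \subset E ->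
  (forall y, y \in X -> y \notin [set g x | x in D]) -> #|D| + #|X| <= #|E|.
Proof.
move=> inj gE XE Xn.
rewrite -(card_in_imset inj).
have dis : [set g x | x in D] :&: X = set0.
  apply/setP => y; rewrite !inE; case yX: (y \in X); last by rewrite andbF.
  by rewrite (negbTE (Xn y yX)).
rewrite -cardsUI dis cards0 addn0; apply: subset_leq_card.
apply/subsetP => y; rewrite inE => /orP [/imsetP [x xD ->]|]; first exact: gE.
by move/subsetP: XE; apply.
Qed.

Definition one n : point n := [ffun _ => true].
Definition zero n : point n := [ffun _ => false].
Lemma ple_one n (x : point n) : ple x (one n).
Proof. by apply/pleP => k; rewrite ffunE. Qed.
Lemma ple_zero n (x : point n) : ple (zero n) x.
Proof. by apply/pleP => k; rewrite ffunE. Qed.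

Lemma S0a n (f : boolfun n) i : positive f -> relevant f i ->
  #|extset (restr f i false)| + 1 <= #|extset f|.
Proof.
move=> pf ri; have [A [mtA Ai]] := (rel_mt i pf).1 ri.
rewrite -(cards1 A); apply: (@count_lemma _ (extset (restr f i false)) (extset f) [set A] (phi f i) (@G6 n f i)).
- by move=> x; apply: G5.
- by rewrite sub1set inE /extremal mtA orbT.
- move=> y; rewrite inE => /eqP ->; apply: G7 => //; by move/mtP: mtA => [].
Qed.

Lemma nc0 n (f : boolfun n) m : positive f -> ~ canalyzing f -> f (upd (one n) m false).
Proof.
move=> pf nc; case e: (f _) => //; case: nc; exists m; left; exists false => x.
rewrite restrE; apply: pos_false pf _ e; apply: ple_upd_mono; exact: ple_one.
Qed.

Lemma nc1 n (f : boolfun n) m : positive f -> ~ canalyzing f -> f (upd (zero n) m true) = false.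
Proof.
move=> pf nc; case e: (f _) => //; case: nc; exists m; right; exists true => x.
rewrite restrE; apply: pf e _; apply: ple_upd_mono; exact: ple_zero.
Qed.

Lemma caseI n (f : boolfun n) i : positive f -> ~ canalyzing f -> canalyzing (restr f i false) ->
  exists j, j != i /\ forall x, f (upd (upd x j false) i false) = false.
Proof.
move=> pf nc [j [[c H]|[c H]]]; (case: (eqVneq j i) => [ji|ji]; [
    case: nc; exists i; left; exists c => x; move: (H x); by rewrite !restrE ji upd_upd | ]).
- case: c H => H; last by exists j; split => // x; move: (H x); rewrite !restrE.
  case: nc; exists i; left; exists true => x; rewrite restrE.
  apply: pf (H x) _; apply: ple_upd_mono; exact: ple_upd_false.
- case: c H => H.
    case: nc; exists j; right; exists true => x; rewrite restrE.
    apply: pf (H x) _; exact: ple_upd_false.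
  case: nc; exists i; left; exists false => x; rewrite restrE.
  apply: pos_false pf _ (H x); apply: ple_upd_mono; exact: ple_upd_true.
Qed.

Lemma S0b n (f : boolfun n) i : positive f -> relevant f i -> ~ canalyzing f ->
  canalyzing (restr f i false) -> #|extset (restr f i false)| + 2 <= #|extset f|.
Proof.
move=> pf ri nc cg.
have [A [mtA Ai]] := (rel_mt i pf).1 ri.
have fA : f A by move/mtP: mtA => [].
have cnt : forall X : {set point n}, X \subset extset f ->
    (forall y, y \in X -> y \notin [set phi f i x | x in extset (restr f i false)]) ->
    #|X| = 2 -> #|extset (restr f i false)| + 2 <= #|extset f|.
  move=> X XE Xn <-.
  apply: (@count_lemma _ (extset (restr f i false)) (extset f) X (phi f i) (@G6 n f i)) => //.
  by move=> x; apply: G5.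
case: (boolP [exists A', min_true f A' && A' i && (A' != A)]) =>
   [/existsP [A' /andP [/andP [mtA' A'i] ne]]|/existsPn uniq].
  apply: (cnt [set A; A']).
  - apply/subsetP => y; rewrite !inE => /orP [/eqP->|/eqP->]; by rewrite /extremal ?mtA ?mtA' orbT.
  - move=> y; rewrite !inE => /orP [/eqP->|/eqP->]; apply: G7 => //.
    by move/mtP: mtA' => [].
  - by rewrite cards2 eq_sym ne.
have uA : forall B, min_true f B -> B i -> B = A.
  move=> B mtB Bi; apply/eqP; move: (uniq B); rewrite mtB Bi /=; by case: eqP.
have [j [ji HI]] := caseI pf nc cg.
have Aj : A j = false.
  have h1 := nc0 j pf nc; have [B [mtB Bl]] := exists_mt h1.
  case Bi: (B i).
    rewrite -(uA B mtB Bi); move/pleP: Bl => h; case Bj: (B j) => //; have := h j Bj; by rewrite upd_i.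
  have le : ple B (upd (upd (one n) j false) i false).
    apply/pleP => l Bl'; rewrite updE; case: eqP => [e|_]; first by move: Bl'; rewrite e Bi.
    by move/pleP: Bl => h; apply: h.
  move/mtP: mtB => [fB _]; by have := HI (one n); rewrite (pf _ _ fB le).
have [m /andP [mi Am]] : exists m, (m != i) && A m.
  case/boolP: [exists m, (m != i) && A m] => [/existsP //|/existsPn H].
  have le : ple A (upd (zero n) i true).
    apply/pleP => l Al; rewrite updE; case: eqP => // /eqP li; by move: (H l); rewrite li Al.
  by have := nc1 i pf nc; rewrite (pf _ _ fA le).
have mj : m != j by apply/eqP => e; move: Am; rewrite e Aj.
set z := upd (upd (one n) j false) m false.
have zi : z i by rewrite /z upd_ne 1?eq_sym // upd_ne 1?eq_sym // ffunE.
have zj : z j = false by rewrite /z upd_ne 1?eq_sym // upd_i.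
have zm : z m = false by rewrite /z upd_i.
have fz : f z = false.
  case fz: (f z) => //; have [B [mtB Bz]] := exists_mt fz.
  case Bi: (B i).
    have e := uA B mtB Bi; move/pleP: Bz => h; by have := h m; rewrite e Am zm => /(_ isT).
  have le : ple B (upd (upd (one n) j false) i false).
    apply/pleP => l Bl; move/pleP: Bz => h; have zl := h l Bl.
    rewrite updE; case: eqP => [e|_]; first by move: Bl; rewrite e Bi.
    rewrite updE; case: eqP => [e|_ ]; first by move: zl; rewrite e zj.
    by rewrite ffunE.
  move/mtP: mtB => [fB _]; by have := HI (one n); rewrite (pf _ _ fB le).
have mfz : max_false f z.
  apply/mfP; split => // y fy zy.
  case yj: (y j).
    have le : ple (upd (one n) m false) y.
      apply/pleP => l; rewrite updE; case: eqP => // /eqP lm _.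
      case: (eqVneq l j) => [->//|lj]; move/pleP: zy; apply; by rewrite /z upd_ne // upd_ne // ffunE.
    by rewrite (pf _ _ (nc0 m pf nc) le) in fy.
  case ym: (y m).
    have le : ple (upd (one n) j false) y.
      apply/pleP => l; rewrite updE; case: eqP => // /eqP lj _.
      case: (eqVneq l m) => [->//|lm]; move/pleP: zy; apply; by rewrite /z upd_ne // upd_ne // ffunE.
    by rewrite (pf _ _ (nc0 j pf nc) le) in fy.
  apply: ple_anti _ zy; apply/pleP => l yl; rewrite /z !updE.
  case: eqP => [e|_]; first by move: yl; rewrite e ym.
  case: eqP => [e|_]; first by move: yl; rewrite e yj.
  by rewrite ffunE.
have nmfg : ~~ max_false (restr f i false) z.
  apply/negP => /mfP [_ H].
  have le : ple (upd (upd z m true) i false) (upd (upd (one n) j false) i false).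
    apply: ple_upd_mono; apply/pleP => l; rewrite updE.
    case: (eqVneq l m) => [->_|lm]; first by rewrite upd_ne // ffunE.
    by rewrite /z upd_ne.
  have gy : restr f i false (upd z m true) = false by rewrite restrE; apply: pos_false pf le (HI (one n)).
  have e := H _ gy (ple_upd_true z m); by move: (upd_true_neq zm); rewrite e eqxx.
apply: (cnt [set A; z]).
- apply/subsetP => y; rewrite !inE => /orP [/eqP->|/eqP->]; by rewrite /extremal ?mtA ?mfz ?orbT.
- move=> y; rewrite !inE => /orP [/eqP->|/eqP->]; [exact: G7 | exact: G8].
- by rewrite cards2; case: eqP => // e; move: fz; rewrite -e fA.
Qed.

Definition compl n (x : point n) : point n := [ffun k => ~~ x k].
Definition dual n (f : boolfun n) : boolfun n := fun x => ~~ f (compl x).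

Lemma complK n (x : point n) : compl (compl x) = x.
Proof. by apply/ffunP => k; rewrite !ffunE negbK. Qed.

Lemma compl_inj n : injective (@compl n).
Proof. by move=> x y e; rewrite -(complK x) e complK. Qed.

Lemma ple_compl n (x y : point n) : ple (compl x) (compl y) = ple y x.
Proof.
apply/pleP/pleP => h k; move: (h k); rewrite !ffunE; by case: (x k); case: (y k) => //= H /H.
Qed.

Lemma compl_upd n (x : point n) i b : compl (upd x i b) = upd (compl x) i (~~ b).
Proof. by apply/ffunP => k; rewrite !ffunE; case: eqP. Qed.

Lemma positive_dual n (f : boolfun n) : positive f -> positive (dual f).
Proof.
move=> pf x y; rewrite /dual => fx xy; apply/negP => fy; move/negP: fx; apply.
by apply: pf fy _; rewrite ple_compl.
Qed.

Lemma mt_dual n (f : boolfun n) x : min_true (dual f) x = max_false f (compl x).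
Proof.
apply/idP/idP => [/mtP [h1 h2]|/mfP [h1 h2]]; [apply/mfP|apply/mtP]; split.
- by move: h1; rewrite /dual; case: (f _).
- move=> y fy xy; rewrite -(complK y); congr compl; apply: h2; first by rewrite /dual complK fy.
  by rewrite -ple_compl complK.
- by rewrite /dual h1.
- move=> y fy yx; apply: compl_inj; apply: h2; first by move: fy; rewrite /dual; case: (f _).
  by rewrite ple_compl.
Qed.

Lemma mf_dual n (f : boolfun n) x : max_false (dual f) x = min_true f (compl x).
Proof.
apply/idP/idP => [/mfP [h1 h2]|/mtP [h1 h2]]; [apply/mtP|apply/mfP]; split.
- by move: h1; rewrite /dual; case: (f _).
- move=> y fy yx; rewrite -(complK y); congr compl; apply: h2; first by rewrite /dual complK fy.
  by rewrite -ple_compl complK.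
- by rewrite /dual h1.
- move=> y fy xy; apply: compl_inj; apply: h2; first by move: fy; rewrite /dual; case: (f _).
  by rewrite ple_compl.
Qed.

Lemma extset_dual n (f : boolfun n) : #|extset (dual f)| = #|extset f|.
Proof.
have -> : extset (dual f) = (@compl n) @^-1: extset f.
  by apply/setP => x; rewrite !inE /extremal mt_dual mf_dual orbC.
apply: card_preimset; exact: compl_inj.
Qed.

Lemma restr_dual n (f : boolfun n) i b : restr (dual f) i b = dual (restr f i (~~ b)).
Proof. apply: functional_extensionality => x; by rewrite restrE /dual restrE compl_upd. Qed.

Lemma rel_dual n (f : boolfun n) j : relevant (dual f) j = relevant f j.
Proof.
apply/existsP/existsP => [[x ne]|[x ne]].
  exists (compl x); move: ne; rewrite !restr_dual /= /dual.
  by case: (restr f j true _); case: (restr f j false _).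
exists (compl x); rewrite !restr_dual /= /dual complK; move: ne.
by case: (restr f j true _); case: (restr f j false _).
Qed.

Lemma const_dual n (g : boolfun n) : constant_fun (dual g) <-> constant_fun g.
Proof.
split => [[c H]|[c H]]; exists (~~ c) => x.
  by move: (H (compl x)); rewrite /dual complK => <-; rewrite negbK.
by rewrite /dual H.
Qed.

Lemma canal_dual n (f : boolfun n) : canalyzing (dual f) <-> canalyzing f.
Proof.
split => [[i [H|H]]|[i [H|H]]]; exists i.
- by right; move: H; rewrite restr_dual => /const_dual.
- by left; move: H; rewrite restr_dual => /const_dual.
- by right; rewrite restr_dual; apply/const_dual.
- by left; rewrite restr_dual; apply/const_dual.
Qed.

Lemma S1a n (f : boolfun n) i : positive f -> relevant f i ->
  #|extset (restr f i true)| + 1 <= #|extset f|.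
Proof.
move=> pf ri; have := @S0a n (dual f) i (positive_dual pf); rewrite rel_dual => /(_ ri).
by rewrite restr_dual !extset_dual.
Qed.

Lemma S1b n (f : boolfun n) i : positive f -> relevant f i -> ~ canalyzing f ->
  canalyzing (restr f i true) -> #|extset (restr f i true)| + 2 <= #|extset f|.
Proof.
move=> pf ri nc cg.
have := @S0b n (dual f) i (positive_dual pf); rewrite rel_dual => /(_ ri).
rewrite restr_dual !extset_dual; apply.
  by move/canal_dual.
by apply/canal_dual.
Qed.

Lemma ext_pos n (f : boolfun n) : 0 < #|extset f|.
Proof.
apply/card_gt0P; case fo: (f (one n)).
  have [x [mt _]] := exists_mt fo; exists x; by rewrite inE /extremal mt orbT.
exists (one n); rewrite inE /extremal; apply/orP; left; apply/mfP; split => // y _ oy.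
by apply: ple_anti => //; apply: ple_one.
Qed.

Lemma relset_pick n (f : boolfun n) r : #|relset f| = r.+1 -> exists i, relevant f i.
Proof.
move=> h; have : 0 < #|relset f| by rewrite h.
by case/card_gt0P => i; rewrite inE; exists i.
Qed.

Lemma lemmaA n (f : boolfun n) : positive f -> #|relset f| + 1 <= #|extset f|.
Proof.
move Hr: #|relset f| => r; elim: r f Hr => [|r IH] f Hr pf; first by rewrite add0n ext_pos.
have [i0 ri0] := relset_pick Hr.
have [i [ri [H|H]]] := C2 pf ri0.
- have e := card_rel_restr ri H; rewrite Hr addn1 in e; case: e => e.
  have := IH _ e (@positive_restr _ f i false pf); have := S0a pf ri.
  by rewrite !addn1 => h1 h2; apply: leq_trans h1.
- have e := card_rel_restr ri H; rewrite Hr addn1 in e; case: e => e.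
  have := IH _ e (@positive_restr _ f i true pf); have := S1a pf ri.
  by rewrite !addn1 => h1 h2; apply: leq_trans h1.
Qed.

Lemma claim3 n (f : boolfun n) (i0 : 'I_n) : positive f -> ~ canalyzing f ->
  #|relset f| + 2 <= #|extset f|.
Proof.
move Hr: #|relset f| => r; elim: r f Hr => [|r IH] f Hr pf nc.
  exfalso.
  have fo : f (one n) by apply: pf (nc0 i0 pf nc) (ple_one _).
  have [x [mt _]] := exists_mt fo.
  case/boolP: [exists k, x k] => [/existsP [k xk]|/existsPn H].
    have : 0 < #|relset f|.
      by apply/card_gt0P; exists k; rewrite inE; apply/(rel_mt k pf); exists x.
    by rewrite Hr.
  have xz : x = zero n by apply/ffunP => k; rewrite ffunE; apply/negbTE.
  move/mtP: mt => [fx _]; move: fx; rewrite xz.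
  by rewrite (pos_false pf (ple_zero (upd (zero n) i0 true)) (nc1 i0 pf nc)).
have [j0 rj0] := relset_pick Hr.
have [i [ri [H|H]]] := C2 pf rj0.
- have e := card_rel_restr ri H; rewrite Hr addn1 in e; case: e => e.
  case: (classic (canalyzing (restr f i false))) => cg.
    have h1 := S0b pf ri nc cg; have h2 := lemmaA (@positive_restr _ f i false pf).
    apply: leq_trans h1; rewrite leq_add2r; by move: h2; rewrite e addn1.
  have h1 := IH _ e (@positive_restr _ f i false pf) cg; have h2 := S0a pf ri.
  apply: leq_trans h2; by rewrite -(addn1 r) addnAC leq_add2r.
- have e := card_rel_restr ri H; rewrite Hr addn1 in e; case: e => e.
  case: (classic (canalyzing (restr f i true))) => cg.
    have h1 := S1b pf ri nc cg; have h2 := lemmaA (@positive_restr _ f i true pf).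
    apply: leq_trans h1; rewrite leq_add2r; by move: h2; rewrite e addn1.
  have h1 := IH _ e (@positive_restr _ f i true pf) cg; have h2 := S1a pf ri.
  apply: leq_trans h2; by rewrite -(addn1 r) addnAC leq_add2r.
Qed.

Theorem mainTheorem11 (n : nat) (f : boolfun n) :
  positive f ->
  ~ canalyzing f ->
  (exists i : 'I_n, ~ canalyzing (restr f i false) \/ ~ canalyzing (restr f i true)) ->
  #|[set i : 'I_n | relevant f i]| + 2 <= #|[set x : point n | extremal f x]|.
Proof.
move=> pf nc [i _]; exact: (claim3 i pf nc).
Qed.
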